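(* Let $\mathcal{I}$ be an interval hypergraph on $[n]$ and $A,B$ acyclic orientations of $\mathcal{I}$. Then $A\le B$ in $P_{\mathcal{I}}$ if and only if $A(I)\le B(I)$ for all $I\in\mathcal{I}$.
   Context: An interval hypergraph $\mathcal{I}$ on $[n]$ is a collection of intervals of $[n]$ containing all singletons. An orientation is a map $O:\mathcal{I}\to[n]$ with $O(I)\in I$; it is acyclic if there are no $H_1,\dots,H_k\in\mathcal{I}$, $k\ge2$, with $O(H_{i+1})\in H_i\setminus\{O(H_i)\}$ for $i\in[k-1]$ and $O(H_1)\in H_k\setminus\{O(H_k)\}$. Orientations $O\ne O'$ are related by an increasing flip (from $O$ to $O'$) if there exist $1\le i<j\le n$ such that for all $H$: if $O(H)\ne O'(H)$ then $O(H)=i$, $O'(H)=j$; and if $\{i,j\}\subseteq H$ then $O(H)=i\iff O'(H)=j$. $P_{\mathcal{I}}$ is the transitive closure of the increasing flip relation on the acyclic orientations of $\mathcal{I}$. *)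

(* Defs.v *)
(* Vertex set [n] is modelled by 'I_n = {0,...,n-1}
   (order-isomorphic to {1,...,n}). An interval is a pair (a,b) of vertices,
   denoting {x | a <= x <= b}. *)
From mathcomp Require Import all_boot.
Set Implicit Arguments.
Unset Strict Implicit.
Unset Printing Implicit Defensive.

Definition interval (n : nat) := ('I_n * 'I_n)%type.

Definition in_interval (n : nat) (I : interval n) (x : 'I_n) : bool :=
  (I.1 <= x <= I.2)%N.

Definition interval_hypergraph (n : nat) (HG : {set interval n}) : Prop :=
  (forall I, I \in HG -> (I.1 <= I.2)%N) /\
  (forall i : 'I_n, (i, i) \in HG).

Definition edge (n : nat) (HG : {set interval n}) :=
  {I : interval n | I \in HG}.

Definition is_orientation (n : nat) (HG : {set interval n})
  (O : edge HG -> 'I_n) : Prop :=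
  forall H : edge HG, in_interval (val H) (O H).

Definition cycle_rel (n : nat) (HG : {set interval n})
  (O : edge HG -> 'I_n) : rel (edge HG) :=
  fun H H' => in_interval (val H) (O H') && (O H' != O H).

Definition acyclic (n : nat) (HG : {set interval n})
  (O : edge HG -> 'I_n) : Prop :=
  forall s : seq (edge HG), (2 <= size s)%N -> ~~ cycle (cycle_rel O) s.

Definition increasing_flip (n : nat) (HG : {set interval n})
  (O O' : edge HG -> 'I_n) : Prop :=
  O <> O' /\
  exists i j : 'I_n, (i < j)%N /\
    forall H : edge HG,
      (O H <> O' H -> O H = i /\ O' H = j) /\
      (in_interval (val H) i && in_interval (val H) j ->
         (O H = i <-> O' H = j)).

Definition acyclic_flip (n : nat) (HG : {set interval n})
  (O O' : edge HG -> 'I_n) : Prop :=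
  is_orientation O /\ acyclic O /\ is_orientation O' /\ acyclic O' /\
  increasing_flip O O'.

Inductive P_le (n : nat) (HG : {set interval n}) :
  (edge HG -> 'I_n) -> (edge HG -> 'I_n) -> Prop :=
| P_le_refl O : P_le O O
| P_le_step O O' O'' : acyclic_flip O O' -> P_le O' O'' -> P_le O O''.

(* Main.v *)
Require Import Defs.
From mathcomp Require Import all_boot.
From Stdlib Require Import FunctionalExtensionality.
Set Implicit Arguments. Unset Strict Implicit. Unset Printing Implicit Defensive.

Lemma connect_ind (T : finType) (e : rel T) (y : T) (P : T -> Prop) :
  P y -> (forall x z, e x z -> connect e z y -> P z -> P x) ->
  forall x, connect e x y -> P x.
Proof.
move=> Py IH x /connectP [p]; elim: p x => [|z p IHp] x /=.
  by move=> _ <-.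
case/andP=> exz pz ly; apply: (IH x z exz); last exact: IHp.
by apply/connectP; exists p.
Qed.

Lemma connect_closed (T : finType) (e : rel T) (P : pred T) x y :
  (forall a b, P a -> e a b -> P b) -> P x -> connect e x y -> P y.
Proof.
move=> cl Px /connectP [p]; elim: p x Px => [|z p IHp] x Px /=; first by move=> _ ->.
case/andP=> exz pz ly; exact: (IHp z (cl _ _ Px exz) pz ly).
Qed.

Lemma connect_first (T : finType) (e : rel T) x y :
  connect e x y -> x = y \/ exists2 z, e x z & connect e z y.
Proof.
move=> /connectP [[|z p]] /=; first by move=> _ ->; left.
case/andP=> exz pz ly; right; exists z => //; apply/connectP; by exists p.
Qed.

Definition avoid (T : finType) (e : rel T) (j : T) : rel T :=
  fun a b => e a b && (a != j).

Lemma avoid_sub (T : finType) (e : rel T) j a b : avoid e j a b -> e a b.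
Proof. by case/andP. Qed.

Lemma connect_avoid (T : finType) (e : rel T) j x y :
  connect e x y -> connect (avoid e j) x y \/
     (connect e x j /\ exists2 z, e j z & connect (avoid e j) z y).
Proof.
move=> cxy.
apply: (@connect_ind T e y (fun x => connect (avoid e j) x y \/
     (connect e x j /\ exists2 z, e j z & connect (avoid e j) z y))) cxy.
  by left.
move=> a z eaz czy IH.
case: IH => [H1|[H1 H2]].
  case: (eqVneq a j) eaz => [->|aj] eaz.
    right; split; first exact: connect0. by exists z.
  left; apply: connect_trans H1; apply: connect1; by rewrite /avoid eaz aj.
right; split => //; apply: connect_trans H1; exact: connect1.
Qed.

Lemma connect_sub2 (T : finType) (e e' : rel T) x y :
  (forall a b, e a b -> e' a b) -> connect e x y -> connect e' x y.
Proof.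
move=> sub; apply: connect_sub => a b eab; apply: connect1; exact: sub.
Qed.

Definition varc (n : nat) (HG : {set interval n}) (O : edge HG -> 'I_n) : rel 'I_n :=
  fun u v => [exists H : edge HG, (O H == u) && in_interval (val H) v && (v != u)].

Lemma varcP (n : nat) (HG : {set interval n}) (O : edge HG -> 'I_n) u v :
  reflect (exists H : edge HG, [/\ O H = u, in_interval (val H) v & v != u]) (varc O u v).
Proof.
apply: (iffP existsP) => [[H /andP [/andP [/eqP h1 h2] h3]]|[H [h1 h2 h3]]]; exists H.
  by split.
by rewrite h1 eqxx h2 h3.
Qed.

Lemma acyc_h (n : nat) (HG : {set interval n}) (O : edge HG -> 'I_n) :
  acyclic O -> forall H H', cycle_rel O H H' -> ~~ connect (cycle_rel O) H' H.
Proof.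
move=> ac H H' r; apply/negP => /connectP [p].
case/lastP: p => [|p' x] /=.
  by move=> _ e; move: r; rewrite e /cycle_rel eqxx andbF.
rewrite last_rcons => pth e; subst x.
have := ac (H :: H' :: p') isT.
by rewrite /cycle /= r pth.
Qed.

Lemma lift (n : nat) (HG : {set interval n}) (O : edge HG -> 'I_n) u v :
  connect (varc O) v u -> forall H : edge HG, in_interval (val H) v -> v != O H ->
  exists2 H'', connect (cycle_rel O) H H'' & (in_interval (val H'') u && (u != O H'')).
Proof.
move=> cvu.
apply: (@connect_ind _ _ u (fun v => forall H : edge HG, in_interval (val H) v -> v != O H ->
  exists2 H'', connect (cycle_rel O) H H'' & (in_interval (val H'') u && (u != O H''))))
  _ _ v cvu.
  by move=> H h1 h2; exists H => //; rewrite h1 h2.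
move=> a z /varcP [H1 [e1 i1 n1]] _ IH H h1 h2.
have n1' : z != O H1 by rewrite e1.
have [H'' c1 c2] := IH H1 i1 n1'.
exists H'' => //; apply: connect_trans c1; apply: connect1.
by rewrite /cycle_rel e1 h1 h2.
Qed.

Lemma vacyc_of_acyc (n : nat) (HG : {set interval n}) (O : edge HG -> 'I_n) :
  acyclic O -> forall u v, varc O u v -> ~~ connect (varc O) v u.
Proof.
move=> ac u v /varcP [H [e1 i1 n1]]; apply/negP => cvu.
have n1' : v != O H by rewrite e1.
have [H'' c1 /andP [c2 c3]] := lift cvu i1 n1'.
have r : cycle_rel O H'' H by rewrite /cycle_rel e1 c2 c3.
by move: (acyc_h ac r); rewrite c1.
Qed.

Lemma acyc_of_vacyc (n : nat) (HG : {set interval n}) (O : edge HG -> 'I_n) :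
  (forall u v, varc O u v -> ~~ connect (varc O) v u) -> acyclic O.
Proof.
move=> va [|H [|H1 s]] // _; apply/negP => cyc.
have sub : subrel (cycle_rel O) (relpre O (varc O)).
  move=> a b /andP [h1 h2]; apply/varcP; exists a; split => //.
have := sub_path sub cyc.
rewrite -path_map /= => /andP [r pth].
move: (va _ _ r) => /negP; apply; apply/connectP.
exists (map O (rcons s H)) => //.
by rewrite last_map last_rcons.
Qed.

Lemma no_cyc2 (T : finType) (e : rel T) :
  (forall u v, e u v -> ~~ connect e v u) ->
  forall a b, connect e a b -> connect e b a -> a = b.
Proof.
move=> ac a b cab cba; case: (connect_first cab) => // [[z eaz czb]].
by move: (ac _ _ eaz); rewrite (connect_trans czb cba).
Qed.

Lemma exists_flip (n : nat) (HG : {set interval n}) (A B : edge HG -> 'I_n) :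
  is_orientation A -> acyclic A -> is_orientation B -> acyclic B ->
  (forall H, A H <= B H) -> forall H0, A H0 < B H0 ->
  exists A', [/\ acyclic_flip A A', (forall H, A' H <= B H),
     (forall H, A H <= A' H) & exists H, A H < A' H].
Proof.
move=> oA aA oB aB le H0 lt0.
have vA := vacyc_of_acyc aA; have vB := vacyc_of_acyc aB.
case: (@arg_maxnP _ H0 (fun H => A H < B H) (fun H => nat_of_ord (A H)) lt0) => Hm ltm maxm.
set i := A Hm in ltm maxm; set b := B Hm in ltm.
have eqAB : forall H, i < A H -> B H = A H.
  move=> H iH; apply: val_inj => /=; apply/eqP; rewrite eqn_leq le andbT leqNgt.
  by apply/negP => /maxm /=; rewrite leqNgt iH.
pose X : pred 'I_n := fun v => (i < v) && [exists H, (A H == i) && in_interval (val H) v].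
have bX : X b.
  rewrite /X ltm /=; apply/existsP; exists Hm; by rewrite eqxx oB.
case: (@arg_minnP _ b X (fun v => #|[pred w | connect (varc B) w v]|) bX) => j jX minj.
have noB : forall w, X w -> w != j -> ~~ connect (varc B) w j.
  move=> w Xw wj; apply/negP => cwj.
  have := minj w Xw; rewrite leqNgt => /negP; apply; apply: proper_card.
  apply/properP; split.
    apply/subsetP => x; rewrite !inE => cxw; exact: connect_trans cxw cwj.
  exists j; rewrite !inE ?connect0 //; apply/negP => cjw.
  by move: wj; rewrite (no_cyc2 vB cwj cjw) eqxx.
case/andP: jX => ij /existsP [H1 /andP [/eqP A1 j1]].
pose A' := fun H => if (A H == i) && in_interval (val H) j then j else A H.
have F1 : forall x y, x != j -> varc A' x y -> varc A x y.
  move=> x y xj /varcP [H [e1 i1 n1]]; apply/varcP; exists H; split => //.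
  move: e1; rewrite /A'; case: ifP => // _ ej; by move: xj; rewrite -ej eqxx.
have F2 : forall y, varc A' j y -> varc A j y \/
    exists H, [/\ A H = i, in_interval (val H) j, in_interval (val H) y & y != j].
  move=> y /varcP [H [e1 i1 n1]]; move: e1; rewrite /A'; case: ifP.
    by case/andP => /eqP hi hj _; right; exists H; split.
  by move=> _ e1; left; apply/varcP; exists H; split.
pose L : pred 'I_n := fun x => (x < i) && connect (varc A) i x.
have Lcl : forall a c, L a -> varc A a c -> L c.
  move=> a c /andP [ai cia] /varcP [H [e1 i1 n1]].
  case: (leqP i c) => ic.
    have iH : in_interval (val H) i.
      move: (oA H) i1; rewrite /in_interval e1 => /andP [h1 h2] /andP [h3 h4].
      by rewrite (leq_trans h1 (ltnW ai)) (leq_trans ic h4).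
    have vai : varc A a i by apply/varcP; exists H; split => //; rewrite neq_ltn ai orbT.
    by move: (vA _ _ vai); rewrite cia.
  rewrite /L ic /=; apply: connect_trans cia _; apply: connect1; apply/varcP; exists H; by split.
have Lj : ~~ L j by rewrite /L ltnNge (ltnW ij).
have transfer : forall x, connect (avoid (varc A) i) x j -> connect (varc A) i x -> i < x ->
    connect (varc B) x j.
  move=> x cxj.
  apply: (@connect_ind _ _ j (fun x => connect (varc A) i x -> i < x -> connect (varc B) x j))
    _ _ x cxj => [_ _|a z /andP [vaz ai] czj IH cia ia]; first exact: connect0.
  have ciz : connect (varc A) i z by apply: connect_trans cia (connect1 vaz).
  case: (ltngtP z i) => zi.
  - have Lz : L z by rewrite /L zi ciz.
    have := connect_closed Lcl Lz (connect_sub2 (@avoid_sub _ _ _) czj).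
    by move/negP: Lj.
  - apply: connect_trans (IH ciz zi); apply: connect1.
    move/varcP: vaz => [H [e1 i1 n1]]; apply/varcP; exists H; split => //.
    by rewrite eqAB e1.
  - have zi' : z = i by apply: val_inj.
    by move: (vA _ _ vaz); rewrite zi' cia.
have KEY : forall w, varc A i w -> w != j -> connect (varc A) w j -> False.
  move=> w viw wj cwj.
  case: (connect_avoid i cwj) => [cwj'|[cwi _]]; last by move: (vA _ _ viw); rewrite cwi.
  have wi : w != i by move/varcP: viw => [H [_ _ ->]].
  case: (ltngtP w i) => wi'.
  - have Lw : L w by rewrite /L wi' (connect1 viw).
    by move: Lj; rewrite (connect_closed Lcl Lw (connect_sub2 (@avoid_sub _ _ _) cwj')).
  - have Xw : X w.
      rewrite /X wi' /=; move/varcP: viw => [H [e1 i1 _]]; apply/existsP; exists H.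
      by rewrite e1 eqxx i1.
    by move: (noB w Xw wj); rewrite (transfer w cwj' (connect1 viw) wi').
  - by move: wi; rewrite (_ : w = i) ?eqxx //; apply: val_inj.
have KC : forall y, varc A' j y -> connect (avoid (varc A') j) y j -> False.
  move=> y vjy cyj.
  have cyjA : connect (varc A) y j.
    apply: connect_sub2 cyj => a c /andP [h1 h2]; exact: F1 h2 h1.
  case: (F2 y vjy) => [vjyA|[H [hi hj hy yj]]]; first by move: (vA _ _ vjyA); rewrite cyjA.
  case: (eqVneq y i) => [yi|yi].
    subst y; case: (connect_first cyj) => [ij'|[w /andP [viw' _] cwj]].
      by move: ij; rewrite ij' ltnn.
    move/varcP: viw' => [H' [e1 i1 n1]].
    move: e1; rewrite /A'; case: ifP => [_ ji|hc e1].
      by move: ij; rewrite ji ltnn.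
    have jH' : ~~ in_interval (val H') j by move: hc; rewrite e1 eqxx /= => ->.
    have wj : w != j by apply/negP => /eqP ewj; move: jH'; rewrite -ewj i1.
    apply: (KEY w) => //; first by apply/varcP; exists H'; split.
    apply: connect_sub2 cwj => a c /andP [h1 h2]; exact: F1 h2 h1.
  apply: (KEY y) => //; by apply/varcP; exists H; split.
have aA' : acyclic A'.
  apply: acyc_of_vacyc => u v vuv; apply/negP => cvu.
  case: (connect_avoid j cvu) => [cvu'|[cvj [z vjz czu]]].
    case: (eqVneq u j) => [uj|uj]; first by subst u; exact: KC vuv cvu'.
    have cvuA : connect (varc A) v u.
      apply: connect_sub2 cvu' => a c /andP [h1 h2]; exact: F1 h2 h1.
    by move: (vA _ _ (F1 _ _ uj vuv)); rewrite cvuA.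
  have czj : connect (varc A') z j.
    apply: connect_trans (connect_sub2 (@avoid_sub _ _ _) czu) _.
    exact: connect_trans (connect1 vuv) cvj.
  case: (connect_avoid j czj) => [czj'|[_ [z' vjz' cz'j]]].
    exact: KC vjz czj'.
  exact: KC vjz' cz'j.
have oA' : is_orientation A'.
  move=> H; rewrite /A'; case: ifP => [/andP [_ ->] //|_]; exact: oA.
have vij : varc A i j by apply/varcP; exists H1; split; rewrite // neq_ltn ij orbT.
exists A'; split.
- split => //; split => //; split => //; split => //; split.
    move=> E; have := congr1 (fun f => f H1) E; rewrite /A' A1 eqxx j1 /= => ij'.
    by move: ij; rewrite -ij' ltnn.
  exists i, j; split => // H; split.
    rewrite /A'; case: ifP => [/andP [/eqP -> _] _|_] //.
  move=> /andP [hi hj]; split; first by rewrite /A' => ->; rewrite eqxx hj.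
  rewrite /A'; case: ifP => [/andP [/eqP -> _] //|_ eAj].
  have vji : varc A j i by apply/varcP; exists H; split => //; rewrite neq_ltn ij.
  by move: (vA _ _ vij); rewrite (connect1 vji).
- move=> H; rewrite /A'; case: ifP => [/andP [/eqP hi hj]|_]; last exact: le.
  rewrite leqNgt; apply/negP => lt.
  have ic : i <= B H by rewrite -hi le.
  case: (ltngtP i (B H)) => ic'.
  + have Xc : X (B H).
      rewrite /X ic' /=; apply/existsP; exists H; by rewrite hi eqxx oB.
    have cj : B H != j by rewrite neq_ltn lt.
    have vcj : varc B (B H) j by apply/varcP; exists H; split => //; rewrite eq_sym.
    by move: (noB _ Xc cj); rewrite (connect1 vcj).
  + by move: ic; rewrite leqNgt ic'.
  + have ei : B H = i by apply: val_inj.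
    have vbi : varc B b i.
      apply/varcP; exists Hm; split => //; last by rewrite neq_ltn ltm.
    have vij' : varc B i j by apply/varcP; exists H; split => //; rewrite neq_ltn ij orbT.
    case: (eqVneq b j) => [bj|bj].
      by move: (vB _ _ vbi); rewrite bj (connect1 vij').
    by move: (noB b bX bj); rewrite (connect_trans (connect1 vbi) (connect1 vij')).
- move=> H; rewrite /A'; case: ifP => [/andP [/eqP -> _]|_] //; exact: ltnW.
- exists H1; by rewrite /A' A1 eqxx j1.
Qed.

Lemma sum_lt (T : finType) (f g : T -> nat) x :
  (forall y, f y <= g y) -> f x < g x -> \sum_y f y < \sum_y g y.
Proof.
move=> le lt; rewrite (bigD1 x) //= [X in _ < X](bigD1 x) //=.
by rewrite -addSn leq_add // leq_sum.
Qed.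

Lemma back (n : nat) (HG : {set interval n}) (B : edge HG -> 'I_n) :
  is_orientation B -> acyclic B -> forall k (A : edge HG -> 'I_n),
  \sum_H (B H - A H) <= k -> is_orientation A -> acyclic A ->
  (forall H, A H <= B H) -> P_le A B.
Proof.
move=> oB aB; elim=> [|k IH] A sk oA aA le.
all: case: (pickP (fun H => A H < B H)) => [H0 lt0|none].
- have : B H0 - A H0 <= 0 by apply: leq_trans sk; rewrite (bigD1 H0) //= leq_addr.
  by rewrite leqn0 subn_eq0 leqNgt lt0.
- have -> : A = B.
    apply: functional_extensionality => H; apply: val_inj; apply/eqP.
    by rewrite eqn_leq le leqNgt none.
  exact: P_le_refl.
- have [A' [fl le' ge' [H1 lt1]]] := exists_flip oA aA oB aB le lt0.
  apply: (P_le_step fl); case: fl => _ [_ [oA' [aA' _]]].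
  apply: IH => //; rewrite -ltnS; apply: leq_trans sk.
  apply: (@sum_lt _ _ _ H1) => [H|].
    by apply: leq_sub2l.
  have := le' H1; move: lt1; set a := A H1; set a' := A' H1; set bb := B H1.
  move=> h1 h2; rewrite ltn_sub2l //; exact: leq_trans h1 h2.
- have -> : A = B.
    apply: functional_extensionality => H; apply: val_inj; apply/eqP.
    by rewrite eqn_leq le leqNgt none.
  exact: P_le_refl.
Qed.

Theorem proposition3p13 (n : nat) (HG : {set interval n})
  (A B : edge HG -> 'I_n) :
  interval_hypergraph HG ->
  is_orientation A -> acyclic A ->
  is_orientation B -> acyclic B ->
  (P_le A B <-> (forall I : edge HG, (A I <= B I)%N)).
Proof.
move=> _ oA aA oB aB; split.
  elim=> [O H|O O' O'' [_ [_ [_ [_ [_ [i [j [ij fl]]]]]]]] _ IH H] //.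
  apply: leq_trans (IH H).
  case: (eqVneq (O H) (O' H)) => [-> //|ne].
  have [-> ->] := (fl H).1 (fun e => (negP ne) (introT eqP e)).
  exact: ltnW.
move=> le; exact: (back oB aB (leqnn _) oA aA le).
Qed.
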